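(* Let $k,n\ge1$ and $T:\{0,1\}^k\to\{0,1\}$ be a truth table. Assume that for every triple $(\mathbf z^{[1]},\mathbf z^{[0]},\mathbf z^{[-1]})$ of $n$-bit strings and every nonempty $S\subseteq\{1,0,-1\}$, the probability $\mathbf E_\sigma\mathbf 1[\mathbf z^{[t]}\not\vdash\sigma\ \forall t\in S]$ depends on the triple only through its configuration basis numbers $(n_s)_{s\in\{0,1\}^3}$ and is a polynomial in the quantities $n_s+n_{\bar s}$. Then for every function $f:\{0,1\}^3\to\mathbb C$, the expectation $$\mathbf E_\sigma f\big(\mathbf 1[\mathbf z^{[1]}\not\vdash\sigma],\mathbf 1[\mathbf z^{[0]}\not\vdash\sigma],\mathbf 1[\mathbf z^{[-1]}\not\vdash\sigma]\big)$$ is a polynomial in the quantities $n_s+n_{\bar s}$, $s\in\{0,1\}^3$.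
   Context: A clause on $n$ variables is $\sigma=((l_0,\nu_0),\dots,(l_{k-1},\nu_{k-1}))$ with $l_q\in\{0,\dots,n-1\}$, $\nu_q\in\{0,1\}$; $\mathbf x\in\{0,1\}^n$ satisfies $\sigma$ ($\mathbf x\vdash\sigma$) iff $T(x_{l_0}\oplus\nu_0,\dots,x_{l_{k-1}}\oplus\nu_{k-1})=1$, and violates it ($\mathbf x\not\vdash\sigma$) otherwise. A random clause has all $l_q$ independent uniform in $\{0,\dots,n-1\}$ and all $\nu_q$ independent uniform in $\{0,1\}$; $\mathbf E_\sigma$ is expectation over it. Configuration basis numbers of the triple: $n_s=|\{j:(z^{[1]}_j,z^{[0]}_j,z^{[-1]}_j)=s\}|$; $\bar s$ is the bitwise complement of $s$. *)

(* Defs.v *)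
From HB Require Import structures.
From mathcomp Require Import all_boot all_order all_algebra all_field.
From mathcomp Require Import mpoly.
Set Implicit Arguments. Unset Strict Implicit. Unset Printing Implicit Defensive.
Import Order.TTheory GRing.Theory Num.Theory.
Local Open Scope ring_scope.

(* A clause on n variables of width k: q |-> (l_q, nu_q). *)
Definition clause (k n : nat) := {ffun 'I_k -> 'I_n * bool}.

Definition satisfies (k n : nat) (T : {ffun 'I_k -> bool} -> bool)
  (x : {ffun 'I_n -> bool}) (sigma : clause k n) : bool :=
  T [ffun q => x (sigma q).1 (+) (sigma q).2].

Definition violates k n T x (sigma : clause k n) : bool := ~~ satisfies T x sigma.

Definition Eclause (k n : nat) (g : clause k n -> algC) : algC :=
  (\sum_(sigma : clause k n) g sigma) / #|{: clause k n}|%:R.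

(* configurations s in {0,1}^3, ordered as (z^[1]_j, z^[0]_j, z^[-1]_j) *)
Definition cfg := (bool * bool * bool)%type.
Definition cfg_compl (s : cfg) : cfg := (~~ s.1.1, ~~ s.1.2, ~~ s.2).

(* a triple of n-bit strings: index 0 = z^[1], 1 = z^[0], 2 = z^[-1] *)
Definition triple (n : nat) := 'I_3 -> {ffun 'I_n -> bool}.

Definition config n (z : triple n) (j : 'I_n) : cfg :=
  (z ord0 j, z (inord 1) j, z (inord 2) j).

Definition nconf n (z : triple n) (s : cfg) : nat :=
  #|[set j : 'I_n | config z j == s]|.

Definition sumpoint n (z : triple n) : 'I_#|{: cfg}| -> algC :=
  fun i => (nconf z (enum_val i) + nconf z (cfg_compl (enum_val i)))%:R.

Definition poly_in_sums n (g : triple n -> algC) : Prop :=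
  exists P : {mpoly algC[#|{: cfg}|]}, forall z : triple n, g z = P.@[sumpoint z].

(* Main.v *)
Require Import Defs.
From HB Require Import structures.
From mathcomp Require Import all_boot all_order all_algebra all_field.
From mathcomp Require Import mpoly.
Local Open Scope ring_scope.
Import GRing.Theory Num.Theory.

Section Proof.
Variables (k n : nat) (T : {ffun 'I_k -> bool} -> bool).

Definition Wv (z : triple n) (s : clause k n) : {set 'I_3} :=
  [set t | violates T (z t) s].

Definition Good (g : {set 'I_3} -> algC) : Prop :=
  poly_in_sums (fun z : triple n => Eclause (fun s : clause k n => g (Wv z s))).

Lemma good_ext g h : Good g -> (forall B, g B = h B) -> Good h.
Proof.
move=> [P HP] e; exists P => z; rewrite -HP /Eclause.
by congr (_ / _); apply: eq_bigr => s _; rewrite e.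
Qed.

Arguments good_ext {g h}.

Lemma good0 : Good (fun _ => 0).
Proof.
exists 0 => z; rewrite meval0 /Eclause big1 ?mul0r //.
Qed.

Lemma goodD g h : Good g -> Good h -> Good (fun B => g B + h B).
Proof.
move=> [P HP] [Q HQ]; exists (P + Q) => z; rewrite mevalD -HP -HQ /Eclause.
by rewrite big_split /= mulrDl.
Qed.

Arguments goodD {g h}.

Lemma goodZ c g : Good g -> Good (fun B => c * g B).
Proof.
move=> [P HP]; exists (c *: P) => z; rewrite mevalZ -HP /Eclause.
by rewrite -mulr_sumr mulrA.
Qed.

Arguments goodZ c {g}.

Lemma good_sum (I : eqType) (r : seq I) (P : pred I) F :
  (forall i, P i -> Good (F i)) -> Good (fun B => \sum_(i <- r | P i) F i B).
Proof.
move=> HF; elim: r => [|a r IH].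
  by apply: (good_ext good0) => B; rewrite big_nil.
case Pa: (P a).
  apply: (good_ext (goodD (HF a Pa) IH)) => B.
  by rewrite big_cons Pa.
by apply: (good_ext IH) => B; rewrite big_cons Pa.
Qed.

Arguments good_sum {I}.

Lemma good1 : (0 < n)%N -> Good (fun _ => 1).
Proof.
move=> hn; exists (1%:MP) => z; rewrite mevalC /Eclause sumr_const.
rewrite -[_ *+ _]mulr_natl mulr1 divff // pnatr_eq0 -lt0n.
apply/card_gt0P; exists [ffun _ => (Ordinal hn, false)]; done.
Qed.

Lemma good_sub (S : {set 'I_3}) : (0 < n)%N ->
  (forall S : {set 'I_3}, S != set0 ->
     poly_in_sums (fun z : triple n =>
       Eclause (fun sigma : clause k n =>
         ([forall t in S, violates T (z t) sigma] : bool)%:R))) ->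
  Good (fun B => (S \subset B)%:R).
Proof.
move=> hn H; have [->|nS] := eqVneq S set0.
  by apply: (good_ext (good1 hn)) => B; rewrite sub0set.
have [P HP] := H S nS; exists P => z; rewrite -HP /Eclause.
congr (_ / _); apply: eq_bigr => s _; congr ((nat_of_bool _)%:R).
apply/idP/idP => [/subsetP h|/forallP h].
  by apply/forallP => t; apply/implyP => /h; rewrite inE.
by apply/subsetP => t /(implyP (h t)); rewrite inE.
Qed.

Lemma sum_ind (P : pred {set 'I_3}) B :
  \sum_(A | P A) (B == A)%:R = (P B)%:R :> algC.
Proof.
case PB: (P B).
  rewrite (bigD1 B) //= eqxx big1 ?addr0 // => A /andP [_ nA].
  by rewrite eq_sym (negbTE nA).
by rewrite big1 // => A PA; case: eqP => // eA; rewrite eA PA in PB.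
Qed.

Lemma good_delta : (0 < n)%N ->
  (forall S : {set 'I_3}, S != set0 ->
     poly_in_sums (fun z : triple n =>
       Eclause (fun sigma : clause k n =>
         ([forall t in S, violates T (z t) sigma] : bool)%:R))) ->
  forall m A, (#|~: A| <= m)%N -> Good (fun B => (B == A)%:R).
Proof.
move=> hn H; elim=> [|m IH] A hA.
  have eA : A = setT.
    by apply/setP => x; rewrite inE; move: hA; rewrite leqn0 cards_eq0 => /eqP /setP /(_ x); rewrite !inE => /negbFE.
  apply: (good_ext (good_sub setT hn H)) => B.
  by rewrite eA subTset.
have Hp : forall A' : {set 'I_3}, A \proper A' -> Good (fun B => (B == A')%:R).
  move=> A' pA; apply: IH; rewrite -ltnS; apply: leq_trans hA.
  by apply: proper_card; rewrite properC.
have G := goodD (good_sub A hn H)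
  (goodZ (-1) (good_sum (index_enum {set 'I_3}) (fun A' : {set 'I_3} => A \proper A')
     (fun A' B => (B == A')%:R) Hp)).
apply: (good_ext G) => B.
rewrite sum_ind subEproper mulN1r.
have [->|nBA] := eqVneq B A; first by rewrite properxx subr0.
by rewrite /= subrr.
Qed.

End Proof.

Theorem mainTheorem5 (k n : nat) (T : {ffun 'I_k -> bool} -> bool) :
  (0 < k)%N -> (0 < n)%N ->
  (forall S : {set 'I_3}, S != set0 ->
     poly_in_sums (fun z : triple n =>
       Eclause (fun sigma : clause k n =>
         ([forall t in S, violates T (z t) sigma] : bool)%:R))) ->
  forall f : cfg -> algC,
    poly_in_sums (fun z : triple n =>
      Eclause (fun sigma : clause k n =>
        f (violates T (z ord0) sigma, violates T (z (inord 1)) sigma,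
           violates T (z (inord 2)) sigma))).
Proof.
move=> _ hn H f.
pose f' (B : {set 'I_3}) := f (ord0 \in B, inord 1 \in B, inord 2 \in B).
have G : Good k n T (fun B => \sum_(A | true) f' A * (B == A)%:R).
  apply: good_sum => A _; apply: goodZ.
  exact: (@good_delta k n T hn H _ A (leqnn _)).
have [P HP] := G; exists P => z; rewrite -HP /Eclause.
congr (_ / _); apply: eq_bigr => s _.
rewrite (bigD1 (Wv k n T z s)) // eqxx mulr1 big1 ?addr0.
  by rewrite Monoid.mulm1 /f' /Wv !in_set.
by move=> A /= nA; rewrite eq_sym (negbTE nA) mulr0.
Qed.
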